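(* Let $\mathsf{V}$ be a variety of $\mathcal{L}$-algebras that has the congruence extension property and a guarded deduction theorem. Then $\mathsf{V}$ has parametrically definable principal congruences.
   Context: $\mathcal{L}$ is an algebraic first-order language with at least one constant symbol. $\mathsf{V}\models\alpha$ means all members satisfy $\alpha$ under all assignments. $\mathrm{Cg}^{\mathbf{A}}(b_1,b_2)$ is the congruence of $\mathbf{A}$ generated by $(b_1,b_2)$. Congruence extension property: for every $\mathbf{A}\in\mathsf{V}$, every congruence of a subalgebra of $\mathbf{A}$ is the restriction of a congruence of $\mathbf{A}$. Guarded deduction theorem: there exist conjunctions of equations $\gamma(x_1,x_2,y_1,y_2,\overline{z})$ and $\varphi(x_1,x_2,y_1,y_2,\overline{z})$ ($\overline{z}$ a finite set of variables) such that for every finite set of variables $\overline{w}$ with $\overline{w}\cap\overline{z}=\emptyset$, all terms $s_1,s_2,t_1,t_2$ in variables $\overline{w}$ and every conjunction of equations $\pi(\overline{w})$: (i) $\mathsf{V}\models(\pi\mathbin{\&}t_1\approx t_2)\to s_1\approx s_2$ iff $\mathsf{V}\models\pi\to\forall\overline{z}.(\gamma\to\varphi)(s_1,s_2,t_1,t_2,\overline{z})$; (ii) for every equation $\sigma(\overline{w})$, $\mathsf{V}\models(\pi\mathbin{\&}\gamma(s_1,s_2,t_1,t_2,\overline{z}))\to\sigma$ iff $\mathsf{V}\models\pi\to\sigma$. Parametrically definable principal congruences: there is a quantifier-free formula $\xi(x_1,x_2,y_1,y_2,\overline{z})$ such that for every $\mathbf{A}\in\mathsf{V}$ and $a_1,a_2,b_1,b_2\in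 A$, $(a_1,a_2)\in\mathrm{Cg}^{\mathbf{A}}(b_1,b_2)$ iff every $\mathbf{B}\in\mathsf{V}$ extending $\mathbf{A}$ satisfies $\forall\overline{z}.\xi(a_1,a_2,b_1,b_2,\overline{z})$. *)

(* Defs.v *)
From Stdlib Require List.
From mathcomp Require Import all_boot.
Set Implicit Arguments. Unset Strict Implicit. Unset Printing Implicit Defensive.

Record language := Language { sym : Type; ar : sym -> nat }.

Definition has_constant (L : language) : Prop := exists f : sym L, ar f = 0.

Record algebra (L : language) := Algebra {
  carrier :> Type;
  op : forall f : sym L, ('I_(ar f) -> carrier) -> carrier }.
Arguments op {L} A f _ : rename.

Inductive term (L : language) : Type :=
| Var : nat -> term L
| App : forall f : sym L, ('I_(ar f) -> term L) -> term L.
Arguments Var {L}.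
Arguments App {L} f _.

Fixpoint eval (L : language) (A : algebra L) (v : nat -> A) (t : term L) : A :=
  match t with
  | Var n => v n
  | App f args => op A f (fun i => eval v (args i))
  end.

Fixpoint vars_in (L : language) (P : nat -> Prop) (t : term L) : Prop :=
  match t with
  | Var n => P n
  | App f args => forall i, vars_in P (args i)
  end.

Fixpoint subst (L : language) (s : nat -> term L) (t : term L) : term L :=
  match t with
  | Var n => s n
  | App f args => App f (fun i => subst s (args i))
  end.

Definition equation (L : language) := (term L * term L)%type.
Definition conj (L : language) := seq (equation L).

Definition eq_holds L (A : algebra L) (v : nat -> A) (e : equation L) : Prop :=
  eval v e.1 = eval v e.2.
Definition conj_holds L (A : algebra L) (v : nat -> A) (c : conj L) : Prop :=
  forall e, List.In e c -> eq_holds v e.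

Definition eq_vars_in L (P : nat -> Prop) (e : equation L) : Prop :=
  vars_in P e.1 /\ vars_in P e.2.
Definition conj_vars_in L (P : nat -> Prop) (c : conj L) : Prop :=
  forall e, List.In e c -> eq_vars_in P e.

Definition eq_subst L (s : nat -> term L) (e : equation L) : equation L :=
  (subst s e.1, subst s e.2).
Definition conj_subst L (s : nat -> term L) (c : conj L) : conj L :=
  map (eq_subst s) c.

Inductive qf (L : language) : Type :=
| QEq : term L -> term L -> qf L
| QNot : qf L -> qf L
| QAnd : qf L -> qf L -> qf L
| QOr : qf L -> qf L -> qf L.

Fixpoint qf_holds L (A : algebra L) (v : nat -> A) (p : qf L) : Prop :=
  match p with
  | QEq t u => eval v t = eval v u
  | QNot p => ~ qf_holds v p
  | QAnd p q => qf_holds v p /\ qf_holds v q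
  | QOr p q => qf_holds v p \/ qf_holds v q
  end.

Fixpoint qf_vars_in L (P : nat -> Prop) (p : qf L) : Prop :=
  match p with
  | QEq t u => vars_in P t /\ vars_in P u
  | QNot p => qf_vars_in P p
  | QAnd p q => qf_vars_in P p /\ qf_vars_in P q
  | QOr p q => qf_vars_in P p /\ qf_vars_in P q
  end.

Definition models L (V : algebra L -> Prop)
  (alpha : forall A : algebra L, (nat -> A) -> Prop) : Prop :=
  forall A : algebra L, V A -> forall v : nat -> A, alpha A v.

Definition variety L (V : algebra L -> Prop) : Prop :=
  exists E : equation L -> Prop,
    forall A : algebra L, V A <-> (forall e, E e -> forall v : nat -> A, eq_holds v e).

Definition compatible L (A : algebra L) (S : A -> Prop) (th : A -> A -> Prop) :=
  forall f (a b : 'I_(ar f) -> A),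
    (forall i, S (a i)) -> (forall i, S (b i)) ->
    (forall i, th (a i) (b i)) -> th (op A f a) (op A f b).

Definition congruence L (A : algebra L) (th : A -> A -> Prop) : Prop :=
  [/\ forall x, th x x, forall x y, th x y -> th y x,
      forall x y z, th x y -> th y z -> th x z & compatible (fun _ => True) th].

Definition Cg L (A : algebra L) (b1 b2 : A) : A -> A -> Prop :=
  fun a1 a2 => forall th, congruence th -> th b1 b2 -> th a1 a2.

Definition subuniverse L (A : algebra L) (S : A -> Prop) : Prop :=
  forall f (a : 'I_(ar f) -> A), (forall i, S (a i)) -> S (op A f a).

(* a congruence of the subalgebra with universe S, as a relation on A
   contained in S x S *)
Definition sub_congruence L (A : algebra L) (S : A -> Prop) (th : A -> A -> Prop) :=
  [/\ forall x y, th x y -> S x /\ S y,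
      forall x, S x -> th x x, forall x y, th x y -> th y x,
      forall x y z, th x y -> th y z -> th x z & compatible S th].

Definition CEP L (V : algebra L -> Prop) : Prop :=
  forall A : algebra L, V A ->
  forall S : A -> Prop, subuniverse S ->
  forall th, sub_congruence S th ->
  exists Th, congruence Th /\ (forall x y, S x -> S y -> (th x y <-> Th x y)).

(* B extends A: an embedding (injective homomorphism) of A into B *)
Definition embedding L (A B : algebra L) (h : A -> B) : Prop :=
  injective h /\ forall f (a : 'I_(ar f) -> A), h (op A f a) = op B f (fun i => h (a i)).

Definition good_vars (x1 x2 y1 y2 : nat) (zs : seq nat) : Prop :=
  uniq [:: x1; x2; y1; y2] /\ (forall z, z \in zs -> z \notin [:: x1; x2; y1; y2]).

Definition in_vars (x1 x2 y1 y2 : nat) (zs : seq nat) : nat -> Prop :=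
  fun n => n \in [:: x1; x2; y1; y2] ++ zs.

Definition subst4 L (x1 x2 y1 y2 : nat) (s1 s2 t1 t2 : term L) : nat -> term L :=
  fun n => if n == x1 then s1 else if n == x2 then s2
           else if n == y1 then t1 else if n == y2 then t2 else Var n.

Definition forall_vars L (A : algebra L) (zs : seq nat) (v : nat -> A)
  (P : (nat -> A) -> Prop) : Prop :=
  forall v' : nat -> A, (forall n, n \notin zs -> v' n = v n) -> P v'.

Definition guarded_deduction_theorem L (V : algebra L -> Prop) : Prop :=
  exists (x1 x2 y1 y2 : nat) (zs : seq nat) (gamma phi : conj L),
  [/\ good_vars x1 x2 y1 y2 zs,
      conj_vars_in (in_vars x1 x2 y1 y2 zs) gamma,
      conj_vars_in (in_vars x1 x2 y1 y2 zs) phi &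
  forall ws : seq nat, (forall n, n \in ws -> n \notin zs) ->
  forall s1 s2 t1 t2 : term L,
    vars_in (fun n => n \in ws) s1 -> vars_in (fun n => n \in ws) s2 ->
    vars_in (fun n => n \in ws) t1 -> vars_in (fun n => n \in ws) t2 ->
  forall pi : conj L, conj_vars_in (fun n => n \in ws) pi ->
  let sg := subst4 x1 x2 y1 y2 s1 s2 t1 t2 in
  (models V (fun A v => (conj_holds v pi /\ eval v t1 = eval v t2) ->
                        eval v s1 = eval v s2)
   <-> models V (fun A v => conj_holds v pi ->
         forall_vars zs v (fun v' => conj_holds v' (conj_subst sg gamma) ->
                                     conj_holds v' (conj_subst sg phi)))) /\
  (forall sigma : equation L, eq_vars_in (fun n => n \in ws) sigma ->
     (models V (fun A v => (conj_holds v pi /\ conj_holds v (conj_subst sg gamma)) ->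
                           eq_holds v sigma)
      <-> models V (fun A v => conj_holds v pi -> eq_holds v sigma)))].

Definition parametrically_definable_principal_congruences L (V : algebra L -> Prop) : Prop :=
  exists (x1 x2 y1 y2 : nat) (zs : seq nat) (xi : qf L),
  [/\ good_vars x1 x2 y1 y2 zs,
      qf_vars_in (in_vars x1 x2 y1 y2 zs) xi &
  forall A : algebra L, V A -> forall a1 a2 b1 b2 : A,
    Cg b1 b2 a1 a2 <->
    (forall (B : algebra L) (h : A -> B), V B -> embedding h ->
       forall v : nat -> B, v x1 = h a1 -> v x2 = h a2 -> v y1 = h b1 -> v y2 = h b2 ->
       qf_holds v xi)].

(* Main.v *)
Require Import Defs.
From mathcomp Require Import all_boot.
From Stdlib Require ClassicalEpsilon FunctionalExtensionality PropExtensionality ProofIrrelevance List Classical.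
Set Implicit Arguments. Unset Strict Implicit. Unset Printing Implicit Defensive.

Notation funext := FunctionalExtensionality.functional_extensionality.
Notation propext := PropExtensionality.propositional_extensionality.


Section Basic.
Variable L : language.

Lemma eval_vars (A : algebra L) (P : nat -> Prop) (v w : nat -> A) (t : term L) :
  vars_in P t -> (forall n, P n -> v n = w n) -> eval v t = eval w t.
Proof.
elim: t => [n|f args IH] /= Ht Hvw; first exact: Hvw.
congr (op A f); apply: funext => i; exact: IH.
Qed.

Lemma eval_subst (A : algebra L) (v : nat -> A) s (t : term L) :
  eval v (subst s t) = eval (fun n => eval v (s n)) t.
Proof.
elim: t => [n|f args IH] //=; congr (op A f); apply: funext => i; exact: IH.
Qed.

Lemma hom_eval (A B : algebra L) (h : A -> B) (v : nat -> A) (t : term L) :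
  (forall f a, h (op A f a) = op B f (fun i => h (a i))) ->
  h (eval v t) = eval (fun n => h (v n)) t.
Proof.
move=> hh; elim: t => [n|f args IH] //=; rewrite hh; congr (op B f); apply: funext => i; exact: IH.
Qed.

Inductive tm (X : Type) : Type :=
| Gen : X -> tm X
| Ap : forall f : sym L, ('I_(ar f) -> tm X) -> tm X.

Definition TmAlg (X : Type) : algebra L := @Algebra L (tm X) (@Ap X).

Fixpoint evalX (X : Type) (C : algebra L) (g : X -> C) (t : tm X) : C :=
  match t with Gen x => g x | Ap f a => op C f (fun i => evalX g (a i)) end.

Lemma evalX_eval (X : Type) (C : algebra L) (g : X -> C) (s : nat -> TmAlg X) (t : term L) :
  evalX g (eval s t) = eval (fun n => evalX g (s n)) t.
Proof.
elim: t => [n|f args IH] //=; congr (op C f); apply: funext => i; exact: IH.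
Qed.

Section Quot.
Variable T : algebra L.
Variable R : T -> T -> Prop.
Hypothesis HR : congruence R.

Definition qcar := {S : T -> Prop | exists t, S = R t}.
Definition qcl (t : T) : qcar := exist _ (R t) (ex_intro _ t erefl).
Definition qrep (q : qcar) : T :=
  proj1_sig (ClassicalEpsilon.constructive_indefinite_description _ (proj2_sig q)).

Lemma qcar_eq (q1 q2 : qcar) : proj1_sig q1 = proj1_sig q2 -> q1 = q2.
Proof.
case: q1 q2 => [S1 p1] [S2 p2] /= e; subst S2; congr exist; exact: ProofIrrelevance.proof_irrelevance.
Qed.

Lemma qrepK q : qcl (qrep q) = q.
Proof.
apply: qcar_eq; rewrite /qrep /=.
case: (ClassicalEpsilon.constructive_indefinite_description _ _) => t /= ->; done.
Qed.

Lemma qcl_eq x y : qcl x = qcl y <-> R x y.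
Proof.
case: HR => Hr Hs Ht _; split.
- move=> /(congr1 (@proj1_sig _ _)) /= e. have: R y y by exact: Hr. rewrite -e; done.
- move=> Hxy; apply: qcar_eq => /=; apply: funext => z; apply: propext; split.
  + move=> Hxz; apply: Ht (Hs _ _ Hxy) Hxz.
  + move=> Hyz; apply: Ht Hxy Hyz.
Qed.

Definition qop (f : sym L) (qs : 'I_(ar f) -> qcar) : qcar := qcl (op T f (fun i => qrep (qs i))).
Definition QAlg : algebra L := @Algebra L qcar qop.

Lemma qcl_hom f (a : 'I_(ar f) -> T) : qcl (op T f a) = qop (fun i => qcl (a i)).
Proof.
apply/qcl_eq; case: HR => Hr Hs Ht Hc; apply: Hc => // i.
apply: Hs; apply/qcl_eq; exact: qrepK.
Qed.

Lemma qeval (s : nat -> T) (t : term L) :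
  eval (A := QAlg) (fun n => qcl (s n)) t = qcl (eval s t).
Proof.
elim: t => [n|f args IH] //=. rewrite qcl_hom /=. congr (@qop f); apply: funext => i; exact: IH.
Qed.

Lemma qeval' (v : nat -> QAlg) (t : term L) :
  eval v t = qcl (eval (fun n => qrep (v n)) t).
Proof.
rewrite -qeval; congr eval; apply: funext => n; by rewrite qrepK.
Qed.
End Quot.
End Basic.
Arguments Gen {L X} x.
Arguments Ap {L X} f a.



Lemma in_In (T : eqType) (x : T) (s : seq T) : x \in s -> List.In x s.
Proof. elim: s => //= y s IH; rewrite inE => /orP [/eqP ->|/IH]; tauto. Qed.

Section FE.
Variable L : language.
Variable V : algebra L -> Prop.
Variable A : algebra L.
Variable X : Type.
Variable j : A -> X.
Variable I : Type.
Variable holdsI : forall C : algebra L, (X -> C) -> I -> Prop.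

Definition Ridx := ({f : sym L & 'I_(ar f) -> A} + I)%type.
Definition holdsR (C : algebra L) (g : X -> C) (r : Ridx) : Prop :=
  match r with
  | inl (existT f a) => g (j (op A f a)) = op C f (fun i => g (j (a i)))
  | inr i => holdsI g i
  end.

Definition FE (t1 t2 : tm L X) : Prop :=
  exists rs : list Ridx, forall C, V C -> forall g : X -> C,
    (forall r, List.In r rs -> holdsR g r) -> evalX g t1 = evalX g t2.

Lemma FE_cong : congruence (A := TmAlg L X) FE.
Proof.
split.
- by move=> x; exists nil.
- by move=> x y [rs H]; exists rs => C HC g Hg; rewrite (H C HC g Hg).
- move=> x y z [rs1 H1] [rs2 H2]; exists (rs1 ++ rs2) => C HC g Hg.
  rewrite (H1 C HC g) ?(H2 C HC g) // => r Hr; apply: Hg; apply: List.in_or_app; tauto.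
- move=> f a b _ _ Hab.
  pose F i := proj1_sig (ClassicalEpsilon.constructive_indefinite_description _ (Hab i)).
  have HF i := proj2_sig (ClassicalEpsilon.constructive_indefinite_description _ (Hab i)).
  exists (List.flat_map F (enum 'I_(ar f))) => C HC g Hg /=.
  congr (op C f); apply: funext => i; apply: (HF i C HC g) => r Hr; apply: Hg.
  apply/List.in_flat_map; exists i; split => //.
  by apply: in_In; rewrite mem_enum.
Qed.

Lemma FE_D f (a : 'I_(ar f) -> A) : FE (Gen (j (op A f a))) (Ap f (fun i => Gen (j (a i)))).
Proof. exists [:: inl (existT _ f a)] => C HC g Hg /=; apply: (Hg (inl (existT _ f a))); simpl; tauto. Qed.

Lemma FE_I (i : I) (t1 t2 : tm L X) :
  (forall C, V C -> forall g : X -> C, holdsI g i -> evalX g t1 = evalX g t2) -> FE t1 t2.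
Proof. move=> H; exists [:: inr i] => C HC g Hg; apply: H => //; apply: (Hg (inr i)); simpl; tauto. Qed.

Lemma FE_E (e : equation L) (s : nat -> TmAlg L X) :
  (forall C, V C -> forall v : nat -> C, eq_holds v e) -> FE (eval s e.1) (eval s e.2).
Proof. move=> H; exists nil => C HC g _; rewrite !evalX_eval; exact: H. Qed.

Lemma FE_combine (Y : Type) (F1 F2 : Y -> tm L X) (l : list Y) :
  (forall y, List.In y l -> FE (F1 y) (F2 y)) ->
  exists rs : list Ridx, forall C, V C -> forall g : X -> C,
    (forall r, List.In r rs -> holdsR g r) -> forall y, List.In y l -> evalX g (F1 y) = evalX g (F2 y).
Proof.
elim: l => [|y l IH] H; first by exists nil.
have [rs1 H1] : FE (F1 y) (F2 y) by apply: H; simpl; tauto.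
have [rs2 H2] := IH (fun y' Hy' => H y' (or_intror Hy')).
exists (rs1 ++ rs2) => C HC g Hg y' /= [<-|Hy'].
- apply: H1 => // r Hr; apply: Hg; apply: List.in_or_app; tauto.
- apply: H2 => // r Hr; apply: Hg; apply: List.in_or_app; tauto.
Qed.
End FE.


Section Tr.
Variable L : language.
Variable A : algebra L.
Variable I : Type.

Fixpoint idx (cs : seq A) (c : A) : nat :=
  match cs with
  | nil => 0
  | x :: l => if ClassicalEpsilon.excluded_middle_informative (c = x) then 0 else (idx l c).+1
  end.

Lemma idx_lt cs c : List.In c cs -> idx cs c < size cs.
Proof.
elim: cs => //= x l IH H.
case: ClassicalEpsilon.excluded_middle_informative => // ne.
case: H => [e|H]; first by case: ne.
by rewrite ltnS; apply: IH.
Qed.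

Lemma nth_idx d cs c : List.In c cs -> nth d cs (idx cs c) = c.
Proof.
elim: cs => //= x l IH H.
case: ClassicalEpsilon.excluded_middle_informative => // ne.
by case: H => [e|H]; [case: ne | apply: IH].
Qed.

Definition gens (rs : list (Ridx A I)) : seq A :=
  List.flat_map (fun r : Ridx A I => match r with
    | inl (existT f a) => op A f a :: List.map a (enum 'I_(ar f))
    | inr _ => nil end) rs.

Variable N : nat.
Variable cs : seq A.

Definition trD (r : Ridx A I) : equation L :=
  match r with
  | inl (existT f a) => (Var (N + idx cs (op A f a)), App f (fun i => Var (N + idx cs (a i))))
  | inr _ => (Var N, Var N)
  end.

Lemma tr_holds (C : algebra L) (v : nat -> C) (rs : list (Ridx A I)) :
  conj_holds v (List.map trD rs) ->
  forall f a, List.In (inl (existT _ f a)) rs ->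
   v (N + idx cs (op A f a)) = op C f (fun i => v (N + idx cs (a i))).
Proof.
move=> H f a Hin; have := H _ (List.in_map trD _ _ Hin); done.
Qed.

Lemma gens_in (rs : list (Ridx A I)) f a :
  List.In (inl (existT _ f a)) rs ->
  List.In (op A f a) (gens rs) /\ forall i, List.In (a i) (gens rs).
Proof.
move=> Hin; split.
- apply/List.in_flat_map; exists (inl (existT _ f a)); simpl; tauto.
- move=> i; apply/List.in_flat_map; exists (inl (existT _ f a)); split => //=.
  right; apply: List.in_map; apply: in_In; by rewrite mem_enum.
Qed.

Lemma iota_idx c : List.In c cs -> N + idx cs c \in iota N (size cs).
Proof. by move=> H; rewrite mem_iota leq_addr ltn_add2l idx_lt. Qed.

Lemma tr_vars (rs : list (Ridx A I)) :
  (forall c, List.In c (gens rs) -> List.In c cs) -> 0 < size cs ->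
  conj_vars_in (fun n => n \in iota N (size cs)) (List.map trD rs).
Proof.
move=> Hg Hs e /List.in_map_iff [[[f a]|i] [<- Hin]] /=.
- have [H1 H2] := gens_in Hin; split => /=.
  + exact/iota_idx/Hg.
  + move=> i; exact/iota_idx/Hg.
- by split => /=; rewrite mem_iota leqnn /= -{1}(addn0 N) ltn_add2l.
Qed.

Lemma tr_hom (C : algebra L) (k : A -> C) d (rs : list (Ridx A I)) :
  (forall f a, k (op A f a) = op C f (fun i => k (a i))) ->
  (forall c, List.In c (gens rs) -> List.In c cs) ->
  conj_holds (fun n => k (nth d cs (n - N))) (List.map trD rs).
Proof.
move=> hk Hg e /List.in_map_iff [[[f a]|i] [<- Hin]]; rewrite /eq_holds //=.
have [H1 H2] := gens_in Hin.
rewrite addKn nth_idx ?hk; last exact: Hg.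
congr (op C f); apply: funext => i; by rewrite addKn nth_idx //; apply: Hg.
Qed.
End Tr.


Lemma In_smap (T U : Type) (F : T -> U) x (l : seq T) : List.In x l -> List.In (F x) (map F l).
Proof. elim: l => //= y l IH [->|H]; [by left | right; exact: IH]. Qed.

Lemma In_smap_inv (T U : Type) (F : T -> U) y (l : seq T) :
  List.In y (map F l) -> exists x, F x = y /\ List.In x l.
Proof.
elim: l => //= x l IH [<-|H]; first by exists x; tauto.
by have [z [? ?]] := IH H; exists z; tauto.
Qed.

Lemma conj_subst_agree L (C : algebra L) (v v2 : nat -> C) sg P (c : conj L) :
  conj_vars_in P c -> (forall n, P n -> eval v2 (sg n) = v n) ->
  (conj_holds v2 (conj_subst sg c) <-> conj_holds v c).
Proof.
move=> Hc Hag; split.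
- move=> H e He; have := H _ (In_smap (eq_subst sg) He).
  have [H1 H2] := Hc e He.
  by rewrite /eq_holds /= !eval_subst (eval_vars H1 Hag) (eval_vars H2 Hag).
- move=> H e' He'; have [e [He1 He]] := In_smap_inv He'; subst e'.
  have [H1 H2] := Hc e He.
  by rewrite /eq_holds /= !eval_subst (eval_vars H1 Hag) (eval_vars H2 Hag); apply: H.
Qed.

Definition qconj L (x : nat) (c : conj L) : qf L :=
  foldr (fun e q => QAnd (QEq e.1 e.2) q) (QEq (Var x) (Var x)) c.

Lemma qconj_holds L (C : algebra L) (v : nat -> C) x (c : conj L) :
  qf_holds v (qconj x c) <-> conj_holds v c.
Proof.
elim: c => [|e c IH] /=; first by split => // _ e [].
split.
- move=> [H1 /IH H2] e' [<-|H]; [exact: H1 | exact: H2].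
- move=> H; split; first by apply: H; left.
  by apply/IH => e' He'; apply: H; right.
Qed.

Lemma qconj_vars L (P : nat -> Prop) x (c : conj L) :
  P x -> conj_vars_in P c -> qf_vars_in P (qconj x c).
Proof.
move=> Hx; elim: c => [|e c IH] Hc /=; first by [].
have [H1 H2] := Hc e (or_introl erefl); split; first by split.
by apply: IH => e' He'; apply: Hc; right.
Qed.

Lemma le_max (zs : seq nat) z : z \in zs -> z <= foldr maxn 0 zs.
Proof.
elim: zs => //= y zs IH; rewrite inE => /orP [/eqP ->|/IH H]; first by rewrite leq_maxl.
by rewrite (leq_trans H) // leq_maxr.
Qed.


Theorem proposition5p6 (L : language) (V : algebra L -> Prop) :
  has_constant L -> variety V -> CEP V -> guarded_deduction_theorem V ->
  parametrically_definable_principal_congruences V.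
Proof.
move=> _ [E HE] _ [x1 [x2 [y1 [y2 [zs [gam [phi [Hgood Hgv Hpv GDT]]]]]]]].
pose N := (foldr maxn 0 zs).+1.
have Hws : forall k n, n \in iota N k -> n \notin zs.
  move=> k n; rewrite mem_iota => /andP [Hn _]; apply/negP => /le_max Hz.
  by move: (leq_trans Hn Hz); rewrite ltnn.
case: (Hgood) => Hu Hzx.
have n12 : (x2 == x1) = false.
  by move: Hu; rewrite /= !inE; case: (x2 =P x1) => // ->; rewrite eqxx /= ?orbT ?andbF.
have n13 : (y1 == x1) = false.
  by move: Hu; rewrite /= !inE; case: (y1 =P x1) => // ->; rewrite eqxx /= ?orbT ?andbF.
have n14 : (y2 == x1) = false.
  by move: Hu; rewrite /= !inE; case: (y2 =P x1) => // ->; rewrite eqxx /= ?orbT ?andbF.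
have n23 : (y1 == x2) = false.
  by move: Hu; rewrite /= !inE; case: (y1 =P x2) => // ->; rewrite eqxx /= ?orbT ?andbF.
have n24 : (y2 == x2) = false.
  by move: Hu; rewrite /= !inE; case: (y2 =P x2) => // ->; rewrite eqxx /= ?orbT ?andbF.
have n34 : (y2 == y1) = false.
  by move: Hu; rewrite /= !inE; case: (y2 =P y1) => // ->; rewrite eqxx /= ?orbT ?andbF.
have Hx1 : in_vars x1 x2 y1 y2 zs x1 by rewrite /in_vars inE eqxx.
exists x1, x2, y1, y2, zs, (QOr (QNot (qconj x1 gam)) (qconj x1 phi)).
split => //; first by split; apply: qconj_vars.
move=> A HA a1 a2 b1 b2; split.
-
  move=> Hcg B h HB [hinj hhom] v Hv1 Hv2 Hv3 Hv4.
  pose holdsI1 := fun (C : algebra L) (g : A -> C) (_ : unit) => g b1 = g b2.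
  pose th := fun c d => FE V (@id A) holdsI1 (Gen c) (Gen d).
  have Hth : congruence th.
    case: (FE_cong V (@id A) holdsI1) => Fr Fs Ft Fc.
    split.
    + move=> x; exact: Fr.
    + move=> x y; exact: Fs.
    + move=> x y z; exact: Ft.
    + move=> f a b _ _ Hab.
      apply: (Ft _ _ _ (FE_D V (@id A) holdsI1 a)).
      apply: (Ft _ _ _ _ (Fs _ _ (FE_D V (@id A) holdsI1 b))).
      by apply: Fc.
  have Hb : th b1 b2 by apply: (FE_I (@id A) (i := tt)) => C _ g.
  have [rs Hrs] := Hcg th Hth Hb.
  pose cs := [:: a1, a2, b1, b2 & gens rs].
  pose pi := List.map (trD N cs) rs.
  have Hgc : forall c, List.In c (gens rs) -> List.In c cs by move=> c Hc; do 4 right.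
  have Hpiv := tr_vars (N:=N) Hgc (isT : 0 < size cs).
  have Hin : forall c, List.In c cs -> N + idx cs c \in iota N (size cs) by move=> c; apply: iota_idx.
  have Hq : models V (fun C w => (conj_holds w pi /\
       eval w (Var (N + idx cs b1)) = eval w (Var (N + idx cs b2))) ->
       eval w (Var (N + idx cs a1)) = eval w (Var (N + idx cs a2))).
    move=> C HC w [Hpi Hbw] /=.
    apply: (Hrs C HC (fun c => w (N + idx cs c))) => [[[f a]|[]]] Hr /=; last exact: Hbw.
    exact: tr_holds Hpi f a Hr.
  have Hv : forall c, List.In c cs -> vars_in (fun n => n \in iota N (size cs)) (@Var L (N + idx cs c)).
    by move=> c Hc /=; apply: Hin.
  have := GDT (iota N (size cs)) (Hws _) _ _ _ _
     (Hv a1 ltac:(simpl; tauto)) (Hv a2 ltac:(simpl; tauto))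
     (Hv b1 ltac:(simpl; tauto)) (Hv b2 ltac:(simpl; tauto)) pi Hpiv.
  move=> /= [Hi _].
  have H1 := (proj1 Hi Hq) B HB.
  pose v2 := fun n => if n \in zs then v n else h (nth a1 cs (n - N)).
  have Hpi2 : conj_holds v2 pi.
    move=> e He; have := tr_hom a1 hhom Hgc He.
    have [E1 E2] := Hpiv e He.
    have Hag : forall n, n \in iota N (size cs) -> h (nth a1 cs (n - N)) = v2 n.
      by move=> n Hn; rewrite /v2 (negbTE (Hws _ _ Hn)).
    by rewrite /eq_holds (eval_vars E1 Hag) (eval_vars E2 Hag).
  have H2 := H1 v2 Hpi2 v2 (fun _ _ => erefl).
  have Hag : forall n, in_vars x1 x2 y1 y2 zs n ->
      eval v2 (subst4 x1 x2 y1 y2 (Var (N + idx cs a1)) (Var (N + idx cs a2))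
                (Var (N + idx cs b1)) (Var (N + idx cs b2)) n) = v n.
    have Hh : forall c, List.In c cs -> v2 (N + idx cs c) = h c.
      by move=> c Hc; rewrite /v2 (negbTE (Hws _ _ (Hin c Hc))) addKn nth_idx.
    move=> n Hn; rewrite /subst4.
    case: ifP => [/eqP ->|f1]; first by rewrite /= Hh; [rewrite Hv1 | simpl; tauto].
    case: ifP => [/eqP ->|f2]; first by rewrite /= Hh; [rewrite Hv2 | simpl; tauto].
    case: ifP => [/eqP ->|f3]; first by rewrite /= Hh; [rewrite Hv3 | simpl; tauto].
    case: ifP => [/eqP ->|f4]; first by rewrite /= Hh; [rewrite Hv4 | simpl; tauto].
    have Hz : n \in zs by move: Hn; rewrite /in_vars mem_cat !inE f1 f2 f3 f4.
    by rewrite /= /v2 Hz.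
  case: (Classical_Prop.classic (conj_holds v gam)) => Hg /=.
  + right; apply/qconj_holds; apply/(conj_subst_agree Hpv Hag); apply: H2.
    exact/(conj_subst_agree Hgv Hag).
  + by left => /qconj_holds.
-
  move=> Hall th Hth Hthb.
  pose rX := fun n => if n == x1 then inl a1 else if n == x2 then inl a2
     else if n == y1 then inl b1 else if n == y2 then inl b2 else @inr A nat n.
  pose Ig := {e : equation L | List.In e gam}.
  pose holdsI2 := fun (C : algebra L) (g : (A + nat)%type -> C) (i : Ig) =>
     eval (fun n => g (rX n)) (proj1_sig i).1 = eval (fun n => g (rX n)) (proj1_sig i).2.
  pose TA := TmAlg L (A + nat).
  pose FB : TA -> TA -> Prop := FE V (@inl A nat) holdsI2.
  have HFB : congruence FB by exact: FE_cong.
  pose B := QAlg FB.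
  have HB : V B.
    apply/HE => e He v; rewrite /eq_holds !(qeval' HFB v); apply/(qcl_eq HFB).
    apply: FE_E => C HC w; exact: (proj1 (HE C) HC e He w).
  pose h := fun c : A => qcl FB (Gen (inl c) : TA) : B.
  have hhom : forall f a, h (op A f a) = op B f (fun i => h (a i)).
    move=> f a; rewrite /h.
    have -> : qcl FB (Gen (inl (op A f a)) : TA) = qcl FB (Ap f (fun i => Gen (inl (a i))) : TA).
      by apply/(qcl_eq HFB); exact: FE_D.
    exact: (qcl_hom HFB (fun i => Gen (inl (a i)))).
  pose gw := fun (C : algebra L) (cs : seq A) (w : nat -> C) (x : (A + nat)%type) =>
     match x with inl c => w (N + idx cs c) | inr n => w n end.
  pose sgc := fun cs : seq A => subst4 x1 x2 y1 y2 (@Var L (N + idx cs a1)) (@Var L (N + idx cs a2))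
                (@Var L (N + idx cs b1)) (@Var L (N + idx cs b2)).
  have Hpt : forall (C : algebra L) (cs : seq A) (w : nat -> C) (n : nat), gw C cs w (rX n) = eval w (sgc cs n).
    move=> C cs w n; rewrite /gw /rX /sgc /subst4.
    by case: (n == x1) => //=; case: (n == x2) => //=; case: (n == y1) => //=; case: (n == y2).
  have Hkey : forall (rs : list (Ridx A Ig)) (cs : seq A) (C : algebra L) (w : nat -> C),
      conj_holds w (List.map (trD N cs) rs) ->
      conj_holds w (conj_subst (sgc cs) gam) ->
      forall r, List.In r rs -> holdsR (@inl A nat) holdsI2 (gw C cs w) r.
    move=> rs cs C w Hpi Hg [[f a]|[e He]] Hr /=; first exact: tr_holds Hpi f a Hr.
    rewrite /holdsI2 /=.
    have -> : (fun n => gw C cs w (rX n)) = (fun n => eval w (sgc cs n)).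
      by apply: funext => n; apply: Hpt.
    rewrite -!eval_subst; exact: (Hg _ (In_smap (eq_subst (sgc cs)) He)).
  have Hcs : forall (rs : list (Ridx A Ig)) (cs : seq A), 0 < size cs ->
      (forall c, List.In c (gens rs) -> List.In c cs) ->
      forall (C : algebra L) (w w' : nat -> C), conj_holds w (List.map (trD N cs) rs) ->
      (forall n, n \notin zs -> w' n = w n) -> conj_holds w' (List.map (trD N cs) rs).
    move=> rs cs Hs Hgc C w w' Hpi Hw' e He.
    have [E1 E2] := tr_vars (N := N) Hgc Hs He.
    have Hag : forall n, n \in iota N (size cs) -> w n = w' n.
      by move=> n Hn; rewrite Hw' // (Hws _ _ Hn).
    by rewrite /eq_holds -(eval_vars E1 Hag) -(eval_vars E2 Hag); apply: Hpi.
  have Hv : forall (cs : seq A) c, List.In c cs ->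
      vars_in (fun n => n \in iota N (size cs)) (@Var L (N + idx cs c)).
    by move=> cs c Hc /=; apply: iota_idx.
  have hinj : injective h.
    move=> c d /(qcl_eq HFB) [rs Hrs].
    pose cs := [:: a1, a2, b1, b2, c, d & gens rs].
    have Hgc : forall c, List.In c (gens rs) -> List.In c cs by move=> c' Hc; do 6 right.
    have Hpiv := tr_vars (N:=N) Hgc (isT : 0 < size cs).
    have := GDT (iota N (size cs)) (Hws _) _ _ _ _
     (Hv cs a1 ltac:(simpl; tauto)) (Hv cs a2 ltac:(simpl; tauto))
     (Hv cs b1 ltac:(simpl; tauto)) (Hv cs b2 ltac:(simpl; tauto)) _ Hpiv.
    move=> /= [_ Hii].
    have Hsv : eq_vars_in (fun n => n \in iota N (size cs)) (@Var L (N + idx cs c), @Var L (N + idx cs d)).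
      by split; apply: Hv; simpl; tauto.
    have H1 := proj1 (Hii _ Hsv).
    have H2 := H1 (fun C HC w Hw => Hrs C HC (gw C cs w) (Hkey rs cs C w (proj1 Hw) (proj2 Hw))) A HA
       (fun n => id (nth c cs (n - N))) (tr_hom c (k := id) (fun _ _ => erefl) Hgc).
    by move: H2; rewrite /eq_holds /= !addKn !nth_idx //; simpl; tauto.
  pose v := fun n => qcl FB (Gen (rX n) : TA) : B.
  have Hx := Hall B h HB (Logic.conj hinj hhom) v.
  have := Hx ltac:(by rewrite /v /rX eqxx) ltac:(by rewrite /v /rX n12 eqxx)
     ltac:(by rewrite /v /rX n13 n23 eqxx) ltac:(by rewrite /v /rX n14 n24 n34 eqxx).
  move=> /= Hxi.
  have Hgv2 : conj_holds v gam.
    move=> e He; rewrite /eq_holds /v !(qeval HFB (fun n => Gen (rX n))).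
    apply/(qcl_eq HFB); apply: (FE_I (@inl A nat) (i := exist _ e He)) => C HC g.
    by rewrite !evalX_eval.
  have Hpv2 : conj_holds v phi.
    case: Hxi => H; last by move/qconj_holds: H.
    by exfalso; apply: H; apply/qconj_holds.
  have HFphi : forall e, List.In e phi ->
      FB (eval (A := TmAlg L (A + nat)) (fun n => Gen (rX n)) e.1)
         (eval (A := TmAlg L (A + nat)) (fun n => Gen (rX n)) e.2).
    move=> e He; apply/(qcl_eq HFB); rewrite -!(qeval HFB); exact: Hpv2.
  have [rs Hrs] := FE_combine HFphi.
  pose cs := [:: a1, a2, b1, b2 & gens rs].
  have Hgc : forall c, List.In c (gens rs) -> List.In c cs by move=> c' Hc; do 4 right.
  have Hpiv := tr_vars (N:=N) Hgc (isT : 0 < size cs).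
  have := GDT (iota N (size cs)) (Hws _) _ _ _ _
     (Hv cs a1 ltac:(simpl; tauto)) (Hv cs a2 ltac:(simpl; tauto))
     (Hv cs b1 ltac:(simpl; tauto)) (Hv cs b2 ltac:(simpl; tauto)) _ Hpiv.
  move=> /= [Hi _].
  have Hm := proj2 Hi.
  have Hq : models V (fun C w => (conj_holds w (List.map (trD N cs) rs) /\
       eval w (Var (N + idx cs b1)) = eval w (Var (N + idx cs b2))) ->
       eval w (Var (N + idx cs a1)) = eval w (Var (N + idx cs a2))).
    apply: Hm => C HC w Hpi w' Hw' Hg e' He'.
    have [e [<- He]] := In_smap_inv He'.
    have Hpi' := Hcs rs cs isT Hgc C w w' Hpi Hw'.
    have := Hrs C HC (gw C cs w') (Hkey rs cs C w' Hpi' Hg) e He.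
    rewrite /eq_holds /= !evalX_eval !eval_subst /=.
    have -> : (fun n => gw C cs w' (rX n)) = (fun n => eval w' (sgc cs n)).
      by apply: funext => n; apply: Hpt.
    done.
  pose Q := QAlg th.
  have HQ : V Q.
    apply/HE => e He w; rewrite /eq_holds !(qeval' Hth w); congr qcl.
    exact: (proj1 (HE A) HA e He).
  have := Hq Q HQ (fun n => qcl th (nth a1 cs (n - N))).
  rewrite /= !addKn !nth_idx; try (simpl; tauto).
  move=> H; apply/(qcl_eq Hth); apply: H; split.
  + exact: (@tr_hom _ _ _ N cs Q (qcl th) a1 rs (fun f a => qcl_hom Hth a) Hgc).
  + by apply/(qcl_eq Hth).
Qed.
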